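(* For every even integer $g\geqslant2$, the ideal $J_g^-\subset\mathbb{C}[\alpha,\gamma]$ is generated by $\zeta_g^-$ together with $\gamma J_{g-2}^-$. Moreover, $\gamma^i\zeta^-_{g-2i}\in J_g^-$ for all integers $i\geqslant0$.
   Context: Let $\zeta_k\in\mathbb{C}[\alpha,\beta,\gamma]$ be defined by $\zeta_i=0$ for $i<0$, $\zeta_0=1$, $\zeta_{k+1}=\alpha\zeta_k+k^2(\beta+(-1)^k8)\zeta_{k-1}+2k(k-1)\gamma\zeta_{k-2}$ ($k\geqslant0$). Let $\zeta_k^\pm\in\mathbb{C}[\alpha,\gamma]$ be obtained by setting $\beta=\pm8$ in $\zeta_k$, and $J_k^\pm=(\zeta^\pm_k,\zeta^\pm_{k+1},\zeta^\pm_{k+2})\subset\mathbb{C}[\alpha,\gamma]$. Explicitly $\zeta^-_{k+1}=\alpha\zeta^-_k-16k^2\zeta^-_{k-1}+2k(k-1)\gamma\zeta^-_{k-2}$ for $k$ odd and $\zeta^-_{k+1}=\alpha\zeta^-_k+2k(k-1)\gamma\zeta^-_{k-2}$ for $k$ even. *)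

(* Defs.v *)
(* C[alpha,gamma] is modelled as {poly {poly algC}}:
   alpha = the outer variable 'X, gamma = the inner variable ('X)%:P. *)
From HB Require Import structures.
From mathcomp Require Import all_boot all_order all_algebra all_field.
Set Implicit Arguments. Unset Strict Implicit. Unset Printing Implicit Defensive.
Import Order.TTheory GRing.Theory Num.Theory.
Local Open Scope ring_scope.

Section Zeta.
Variable T : comRingType.
Variables (a b c : T). (* alpha, beta, gamma *)

(* zeta_aux k = (zeta_k, zeta_{k-1}, zeta_{k-2}), with zeta_i = 0 for i < 0 *)
Fixpoint zeta_aux (k : nat) : T * T * T :=
  match k with
  | 0 => (1, 0, 0)
  | k'.+1 =>
      let '(z0, z1, z2) := zeta_aux k' in
      (a * z0 + (k' ^ 2)%N%:R * (b + (-1) ^+ k' * 8) * z1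
         + (2 * k' * (k'.-1))%N%:R * c * z2, z0, z1)
  end.

Definition zeta (k : nat) : T := (zeta_aux k).1.1.

Definition zetaZ (n : int) : T :=
  match n with Posz k => zeta k | Negz _ => 0 end.

End Zeta.

Definition ideal_gen (T : comRingType) (S : T -> Prop) (p : T) : Prop :=
  exists (gs cs : seq T),
    (forall i, (i < size gs)%N -> S gs`_i) /\
    p = \sum_(i < size gs) cs`_i * gs`_i.

Definition CAG := {poly {poly algC}}.
Definition alpha : CAG := 'X.
Definition gamma : CAG := ('X)%:P.

Definition zetam (k : nat) : CAG := zeta alpha (-8) gamma k.
Definition zetamZ (n : int) : CAG := zetaZ alpha (-8) gamma n.

Definition Jm (k : nat) : CAG -> Prop :=
  ideal_gen (fun q => q = zetam k \/ q = zetam k.+1 \/ q = zetam k.+2).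

(* Main.v *)
Require Import Defs.
From mathcomp Require Import all_boot all_order all_algebra all_field.
From mathcomp Require Import zify ring.
Set Implicit Arguments. Unset Strict Implicit. Unset Printing Implicit Defensive.
Import Order.TTheory GRing.Theory Num.Theory.
Set Warnings "-notation-overridden,-ambiguous-paths,-deprecated".

Local Open Scope ring_scope.

Section Ideal.
Variable T : comRingType.
Implicit Types S : T -> Prop.

Lemma ideal0 S : ideal_gen S 0.
Proof. exists [::], [::]; split => //; by rewrite big_ord0. Qed.

Lemma ideal1 S x : S x -> ideal_gen S x.
Proof.
move=> Sx; exists [:: x], [:: 1]; split; first by case.
by rewrite big_ord1 /= mul1r.
Qed.

Lemma idealD S p q : ideal_gen S p -> ideal_gen S q -> ideal_gen S (p + q).
Proof.
move=> [gs1 [cs1 [H1 ->]]] [gs2 [cs2 [H2 ->]]].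
exists (gs1 ++ gs2), (mkseq (nth 0 cs1) (size gs1) ++ cs2); split.
  move=> i; rewrite size_cat nth_cat; case: ifP => Hi Hs; first exact: H1.
  move/negbT: Hi; rewrite -leqNgt => Hi; apply: H2; by rewrite ltn_subLR.
rewrite size_cat big_split_ord /=; congr (_ + _); apply: eq_bigr => i _.
  by rewrite !nth_cat size_mkseq (ltn_ord i) nth_mkseq.
by rewrite !nth_cat size_mkseq /= ltnNge leq_addr /= addKn.
Qed.

Lemma idealM S x p : ideal_gen S p -> ideal_gen S (x * p).
Proof.
move=> [gs [cs [H ->]]]; exists gs, (mkseq (fun i => x * cs`_i) (size gs)).
split => //; rewrite mulr_sumr; apply: eq_bigr => i _.
by rewrite nth_mkseq // mulrA.
Qed.

Lemma idealN S p : ideal_gen S p -> ideal_gen S (- p).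
Proof. by move=> H; rewrite -mulN1r; apply: idealM. Qed.

Lemma ideal_mono S S' x p : ideal_gen S p ->
  (forall s, S s -> ideal_gen S' (x * s)) -> ideal_gen S' (x * p).
Proof.
move=> [gs [cs [H ->]]] HS; elim: gs cs H => [|g gs IH] cs H.
  by rewrite big_ord0 mulr0; apply: ideal0.
rewrite big_ord_recl mulrDr; apply: idealD.
  by rewrite mulrCA; apply: idealM; apply: HS; apply: (H 0%N).
have := IH (behead cs) (fun i Hi => H i.+1 Hi).
by under eq_bigr => i _ do rewrite nth_behead.
Qed.

End Ideal.

Lemma zeta_rec (T : comRingType) (a b c : T) k :
  zeta a b c k.+3 = a * zeta a b c k.+2
    + (k.+2 ^ 2)%N%:R * (b + (-1) ^+ k.+2 * 8) * zeta a b c k.+1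
    + (2 * k.+2 * k.+1)%N%:R * c * zeta a b c k.
Proof. by rewrite /zeta /=; case: (zeta_aux a b c k) => [[x y] z]. Qed.

Lemma nat_unit (n : nat) : (0 < n)%N -> exists c : CAG, c * n%:R = 1.
Proof.
move=> Hn; exists (((n%:R : algC)^-1)%:P)%:P.
rewrite -[n%:R : CAG](rmorph_nat (@polyC _)).
rewrite -[n%:R : {poly algC}](rmorph_nat (@polyC _)).
by rewrite -!polyCM mulVf // pnatr_eq0 -lt0n.
Qed.

Lemma zm1 m : ~~ odd m ->
  zetam m.+3 = alpha * zetam m.+2 + (2 * m.+2 * m.+1)%N%:R * (gamma * zetam m).
Proof.
move=> Hm; rewrite /zetam zeta_rec -signr_odd /= (negbTE Hm) expr0.
ring.
Qed.

Lemma zm2 m : ~~ odd m ->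
  zetam m.+4 = alpha * zetam m.+3 - (16 * m.+3 ^ 2)%N%:R * zetam m.+2
     + (2 * m.+3 * m.+2)%N%:R * (gamma * zetam m.+1).
Proof.
move=> Hm; rewrite /zetam zeta_rec -signr_odd /= (negbTE Hm) expr1.
ring.
Qed.

Lemma part1 m : ~~ odd m -> forall p : CAG,
  Jm m.+2 p <->
  ideal_gen (fun q => q = zetam m.+2 \/ exists r, Jm m r /\ q = gamma * r) p.
Proof.
move=> Hm p; split.
  have H1 : ideal_gen (fun q => q = zetam m.+2 \/ exists r, Jm m r /\ q = gamma * r)
               (zetam m.+3).
    rewrite zm1 //; apply: idealD; apply: idealM; apply: ideal1; first by left.
    by right; exists (zetam m); split => //; apply: ideal1; left.
  move=> Hp; rewrite -[p]mul1r; apply: (ideal_mono Hp) => s [->|[->|->]];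
    rewrite mul1r.
  - by apply: ideal1; left.
  - exact: H1.
  rewrite zm2 //; apply: idealD; first apply: idealD.
  - by apply: idealM.
  - by apply: idealN; apply: idealM; apply: ideal1; left.
  apply: idealM; apply: ideal1; right; exists (zetam m.+1); split => //.
  by apply: ideal1; right; left.
move=> Hp; rewrite -[p]mul1r; apply: (ideal_mono Hp) => s [->|[r [Hr ->]]].
  by rewrite mul1r; apply: ideal1; left.
rewrite mul1r; apply: (ideal_mono Hr) => s' [->|[->|->]].
- have [c Hc] := (@nat_unit (2 * m.+2 * m.+1)%N isT).
  have -> : gamma * zetam m = c * (zetam m.+3 - alpha * zetam m.+2).
    transitivity (c * ((2 * m.+2 * m.+1)%N%:R * (gamma * zetam m))).
      by rewrite mulrA Hc mul1r.
    congr (c * _); rewrite zm1 //; ring.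
  apply: idealM; apply: idealD; first by apply: ideal1; right; left.
  by apply: idealN; apply: idealM; apply: ideal1; left.
- have [c Hc] := (@nat_unit (2 * m.+3 * m.+2)%N isT).
  have -> : gamma * zetam m.+1 = c * (zetam m.+4 - alpha * zetam m.+3
              + (16 * m.+3 ^ 2)%N%:R * zetam m.+2).
    transitivity (c * ((2 * m.+3 * m.+2)%N%:R * (gamma * zetam m.+1))).
      by rewrite mulrA Hc mul1r.
    congr (c * _); rewrite zm2 //; ring.
  apply: idealM; apply: idealD; first apply: idealD.
  + by apply: ideal1; right; right.
  + by apply: idealN; apply: idealM; apply: ideal1; right; left.
  by apply: idealM; apply: ideal1; left.
by apply: idealM; apply: ideal1; left.
Qed.

Lemma contain m : ~~ odd m -> forall r, Jm m r -> Jm m.+2 (gamma * r).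
Proof.
move=> Hm r Hr; apply/(part1 Hm); apply: ideal1; right; by exists r.
Qed.

Lemma part2 i : forall g, ~~ odd g ->
  Jm g (gamma ^+ i * zetamZ (g%:Z - (2 * i)%N%:Z)).
Proof.
elim: i => [|i IH] g Hg.
  by rewrite expr0 mul1r muln0 subr0; apply: ideal1; left.
case: (leqP (2 * i.+1) g) => H.
  case: g Hg H => [|[|m]] Hg H //.
  have -> : (m.+2%:Z - (2 * i.+1)%N%:Z) = (m%:Z - (2 * i)%N%:Z) by lia.
  have Hm : ~~ odd m by move: Hg => /=; rewrite negbK.
  rewrite exprS -mulrA; apply: contain; [exact: Hm | apply: IH; exact: Hm].
case E: (g%:Z - (2 * i.+1)%N%:Z) => [k|k]; first lia.
by rewrite mulr0; apply: ideal0.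
Qed.

Theorem lemma5p1 (g : nat) (Hg : (2 <= g)%N) (Hev : ~~ odd g) :
  (forall p : CAG,
     Jm g p <->
     ideal_gen (fun q => q = zetam g \/ exists r, Jm (g - 2) r /\ q = gamma * r) p)
  /\ (forall i : nat, Jm g (gamma ^+ i * zetamZ (g%:Z - (2 * i)%N%:Z))).
Proof.
split; last by move=> i; apply: part2.
case: g Hg Hev => [|[|m]] // _ Hm p.
have -> : (m.+2 - 2)%N = m by lia.
apply: part1; by move: Hm => /=; rewrite negbK.
Qed.
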